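(* Let $A\subset E$ be nonempty with finitely many minimal elements. Then the problem $$\min_L \xi(L)\quad\text{s.t. } L\text{ is a lower contour set in } A$$ admits a solution and has a largest minimizer, i.e. a minimizer $L^\star$ such that every minimizer $L$ satisfies $L\subset L^\star$.
   Context: $E$ is a finite or countably infinite set with a preorder $\precsim$ (reflexive and transitive) such that for every sequence $e_1\succsim e_2\succsim\cdots$ in $E$ there is $N\ge1$ with $e_N\precsim e_n$ for all $n\ge N$. Write $e\sim e'$ if $e\precsim e'$ and $e'\precsim e$. The minimal elements of $A$ are $\min(A,\precsim)=\{e\in A:\forall e'\in A,\ e'\precsim e\Rightarrow e'\sim e\}$. $\pi_0\in(0,1)$; $F_G,F_B$ are probability distributions on $E$ such that every $e\in E$ has $F_G(e)>0$ or $F_B(e)>0$. For nonempty $B\subset E$, $\nu(B)=\frac{F_G(B)\pi_0}{F_G(B)\pi_0+F_B(B)(1-\pi_0)}$ and $\xi(B)=\phi(\nu(B))$, where $\phi:[0,1]\to\mathbb{R}$ is strictly increasing. For nonempty $A\subset E$, a nonempty $L\subset A$ is a lower contour set in $A$ if for all $e\in L$ and $e'\in A$, $e'\precsim e$ implies $e'\in L$. *)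

(* Defs.v *)
From HB Require Import structures.
From mathcomp Require Import all_boot all_order all_algebra.
From mathcomp Require Import all_classical all_reals ereal esum.
Set Implicit Arguments. Unset Strict Implicit. Unset Printing Implicit Defensive.
Import Order.TTheory GRing.Theory Num.Theory.
Local Open Scope classical_set_scope.
Local Open Scope ring_scope.

Definition preorder_cond (E : Type) (le : E -> E -> Prop) : Prop :=
  [/\ (forall e, le e e),
      (forall a b c, le a b -> le b c -> le a c) &
      (forall s : nat -> E, (forall n, le (s n.+1) (s n)) ->
         exists N, forall n, (N <= n)%N -> le (s N) (s n))].

Definition is_pmf (R : realType) (E : choiceType) (f : E -> R) : Prop :=
  (forall e, 0 <= f e) /\ (\esum_(i in [set: E]) (f i)%:E = 1%E).

Definition mass (R : realType) (E : choiceType) (f : E -> R) (B : set E) : R :=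
  fine (\esum_(i in B) (f i)%:E).

Definition nu (R : realType) (E : choiceType) (pi0 : R) (FG FB : E -> R) (B : set E) : R :=
  mass FG B * pi0 / (mass FG B * pi0 + mass FB B * (1 - pi0)).

Definition xi (R : realType) (E : choiceType) (phi : R -> R) (pi0 : R) (FG FB : E -> R)
  (B : set E) : R := phi (nu pi0 FG FB B).

Definition equiv_pre (E : Type) (le : E -> E -> Prop) (e e' : E) : Prop :=
  le e e' /\ le e' e.

Definition minimals (E : Type) (le : E -> E -> Prop) (A : set E) : set E :=
  [set e | A e /\ forall e', A e' -> le e' e -> equiv_pre le e' e].

Definition lower_contour (E : Type) (le : E -> E -> Prop) (A L : set E) : Prop :=
  [/\ L !=set0, L `<=` A &
      forall e e', L e -> A e' -> le e' e -> L e'].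

Definition is_minimizer (R : realType) (E : choiceType) (le : E -> E -> Prop)
  (phi : R -> R) (pi0 : R) (FG FB : E -> R) (A L : set E) : Prop :=
  lower_contour le A L /\
  forall L', lower_contour le A L' -> xi phi pi0 FG FB L <= xi phi pi0 FG FB L'.

(* Main.v *)
Require Import Defs.
From HB Require Import structures.
From mathcomp Require Import all_boot all_order all_algebra.
From mathcomp Require Import all_classical all_reals ereal esum.
From mathcomp Require Import ring lra.
Import Order.TTheory GRing.Theory Num.Theory.
Local Open Scope classical_set_scope.
Local Open Scope ring_scope.
Set Implicit Arguments. Unset Strict Implicit.

Lemma esum_le1 (R : realType) (E : choiceType) (f : E -> R) (S : set E) :
  is_pmf f -> (\esum_(i in S) (f i)%:E <= 1)%E.
Proof.
move=> [f0 f1]; rewrite -f1 (esumID S setT); last by move=> i _; rewrite lee_fin.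
rewrite setTI leeDl // esum_ge0 // => i _; by rewrite lee_fin f0.
Qed.

Lemma esum_fin (R : realType) (E : choiceType) (f : E -> R) (S : set E) :
  is_pmf f -> \esum_(i in S) (f i)%:E = (mass f S)%:E.
Proof.
move=> pf; rewrite /mass fineK //; rewrite fin_numE.
have h0 : (0 <= \esum_(i in S) (f i)%:E)%E.
  by apply: esum_ge0 => i _; rewrite lee_fin; case: pf.
have h1 := esum_le1 S pf.
apply/andP; split.
  by apply/negP => /eqP h; rewrite h in h0.
by apply/negP => /eqP h; rewrite h in h1.
Qed.

Lemma mass_ge0 (R : realType) (E : choiceType) (f : E -> R) (S : set E) :
  is_pmf f -> 0 <= mass f S.
Proof.
move=> pf; rewrite -lee_fin -esum_fin //.
by apply: esum_ge0 => i _; rewrite lee_fin; case: pf.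
Qed.

Lemma mass_le1 (R : realType) (E : choiceType) (f : E -> R) (S : set E) :
  is_pmf f -> mass f S <= 1.
Proof. by move=> pf; rewrite -lee_fin -esum_fin //; exact: esum_le1. Qed.

Lemma mass_split (R : realType) (E : choiceType) (f : E -> R) (S B : set E) :
  is_pmf f -> mass f S = mass f (S `&` B) + mass f (S `&` ~` B).
Proof.
move=> pf; apply/eqP; rewrite -eqe -esum_fin // EFinD -!esum_fin //.
by rewrite (esumID B S) // => i _; rewrite lee_fin; case: pf.
Qed.

Lemma mass_mono (R : realType) (E : choiceType) (f : E -> R) (S T : set E) :
  is_pmf f -> S `<=` T -> mass f S <= mass f T.
Proof.
move=> pf ST; rewrite (mass_split T S pf) (setIidr ST) lerDl mass_ge0 //.
Qed.

Lemma mass_set0 (R : realType) (E : choiceType) (f : E -> R) :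
  is_pmf f -> mass f set0 = 0.
Proof. by move=> pf; rewrite /mass esum_set0. Qed.

Lemma mass_set1 (R : realType) (E : choiceType) (f : E -> R) e :
  is_pmf f -> mass f [set e] = f e.
Proof. by move=> pf; rewrite /mass esum_set1 // lee_fin; case: pf. Qed.

Lemma mass_setT (R : realType) (E : choiceType) (f : E -> R) :
  is_pmf f -> mass f setT = 1.
Proof. by move=> [f0 f1]; rewrite /mass f1. Qed.

Lemma mass_tail (R : realType) (E : choiceType) (f : E -> R) (eps : R) :
  is_pmf f -> 0 < eps -> exists s : seq E, mass f (~` [set` s]) < eps.
Proof.
move=> pf e0.
have : ((1 - eps)%:E < \esum_(i in [set: E]) (f i)%:E)%E.
  by case: pf => _ ->; rewrite lte_fin ltrBlDr ltrDl.
move=> /ereal_sup_gt [y [X [finX _] <-]] lty.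
have [s Xs] := (finite_seqP X).1 finX.
exists s; rewrite -Xs.
have := mass_split setT X pf; rewrite mass_setT // setTI.
rewrite /mass -(esum_fset finX) in lty; last by move=> i _; rewrite lee_fin; case: pf.
rewrite esum_fin // lte_fin in lty.
rewrite setTI.
rewrite /mass in lty *. lra.
Qed.

Lemma pigeon (T : eqType) (s : seq T) (P : T -> nat -> Prop) :
  (forall x n m, (n <= m)%N -> P x m -> P x n) ->
  (forall n, exists x, x \in s /\ P x n) -> exists x, x \in s /\ forall n, P x n.
Proof.
move=> anti; elim: s => [|y s IH] H.
  by have [x [] ] := H 0%N.
case: (pselect (forall n, P y n)) => [Hy|].
  by exists y; rewrite mem_head.
move=> /existsNP [n0 Hn0].
have [|x [xs Px]] := IH.
  move=> n; have [x [xin Px]] := H (maxn n n0).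
  move: xin; rewrite in_cons => /orP [/eqP exy|xs].
    by exfalso; apply: Hn0; apply: (anti y n0 (maxn n n0)); rewrite ?leq_maxr // -exy.
  by exists x; split => //; apply: anti Px; rewrite leq_maxl.
by exists x; rewrite in_cons xs orbT.
Qed.

Definition downset (E : Type) (le : E -> E -> Prop) (A D : set E) : Prop :=
  D `<=` A /\ forall e e', D e -> A e' -> le e' e -> D e'.

Lemma downsetU (E : Type) (le : E -> E -> Prop) (A X Y : set E) :
  downset le A X -> downset le A Y -> downset le A (X `|` Y).
Proof.
move=> [XA Xc] [YA Yc]; split.
  by move=> e [/XA|/YA].
by move=> e e' [Xe|Ye] Ae' le'; [left; apply: Xc Xe Ae' le'|right; apply: Yc Ye Ae' le'].
Qed.

Lemma downsetI (E : Type) (le : E -> E -> Prop) (A X Y : set E) :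
  downset le A X -> downset le A Y -> downset le A (X `&` Y).
Proof.
move=> [XA Xc] [YA Yc]; split.
  by move=> e [/XA].
by move=> e e' [Xe Ye] Ae' le'; split; [apply: Xc Xe Ae' le'|apply: Yc Ye Ae' le'].
Qed.

Lemma lc_downset (E : Type) (le : E -> E -> Prop) (A L : set E) :
  lower_contour le A L -> downset le A L.
Proof. by case. Qed.

Lemma downset_lc (E : Type) (le : E -> E -> Prop) (A L : set E) :
  downset le A L -> L !=set0 -> lower_contour le A L.
Proof. by case. Qed.

Definition hsplit (R : realType) (E : Type) (h : set E -> R) :=
  forall S B, h S = h (S `&` B) + h (S `&` ~` B).

Definition htail (R : realType) (E : eqType) (h : set E -> R) :=
  forall eps, 0 < eps -> exists s : seq E, forall S,
    - eps <= h (S `&` ~` [set` s]) /\ h (S `&` ~` [set` s]) <= eps.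

Lemma h_approx (R : realType) (E : eqType) (h : set E -> R) (s : seq E) eps X Y :
  hsplit h ->
  (forall S, - eps <= h (S `&` ~` [set` s]) /\ h (S `&` ~` [set` s]) <= eps) ->
  X `&` [set` s] = Y `&` [set` s] -> h X <= h Y + eps *+ 2.
Proof.
move=> hs ht XY; rewrite (hs X [set` s]) (hs Y [set` s]) XY.
have [_ h1] := ht X; have [h2 _] := ht Y.
rewrite mulr2n; lra.
Qed.

Lemma h_modular (R : realType) (E : Type) (h : set E -> R) X Y :
  hsplit h -> h (X `|` Y) + h (X `&` Y) = h X + h Y.
Proof.
move=> hs; rewrite (hs (X `|` Y) X) (hs Y X).
have -> : (X `|` Y) `&` X = X by rewrite predeqE => x /=; tauto.
have -> : (X `|` Y) `&` ~` X = Y `&` ~` X by rewrite predeqE => x /=; tauto.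
have -> : X `&` Y = Y `&` X by rewrite predeqE => x /=; tauto.
lra.
Qed.

Lemma h_le0 (R : realType) (x : R) : (forall eps, 0 < eps -> x <= eps) -> x <= 0.
Proof.
move=> H; case: (lerP x 0) => // x0.
have := H (x / 2); rewrite divr_gt0 // => /(_ isT); lra.
Qed.

Definition q (R : realType) (n : nat) : R := ((2:R) ^+ n)^-1.

Lemma q_pos (R : realType) n : 0 < q R n.
Proof. by rewrite /q invr_gt0 exprn_gt0. Qed.

Lemma qS (R : realType) n : q R n.+1 = q R n / 2.
Proof. by rewrite /q exprSr invfM mulrC. Qed.

Lemma q_anti (R : realType) n m : (n <= m)%N -> q R m <= q R n.
Proof.
move=> /subnK <-; elim: (m - n)%N => [|k IH]; first by rewrite add0n.
rewrite addSn qS; have := q_pos R (k + n); lra.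
Qed.

Lemma q_small (R : realType) (eps : R) : 0 < eps -> exists N, q R N <= eps.
Proof.
move=> e0; have := @archi_boundP R eps^-1; rewrite invr_ge0 ltW // => /(_ isT).
set N := Num.Def.archi_bound _ => HN.
exists N; rewrite /q -(invrK eps) lef_pV2 ?posrE ?exprn_gt0 ?invr_gt0 //.
apply: (le_trans (ltW HN)).
have : (N < 2 ^ N)%N by apply: ltn_expl.
by rewrite -(ltr_nat R) natrX => /ltW.
Qed.

Lemma exists_zero (R : realType) (E : eqType) (le : E -> E -> Prop) (A : set E)
  (h : set E -> R) (ms : seq E) :
  hsplit h -> htail h ->
  (forall D, downset le A D -> 0 <= h D) ->
  (forall d, 0 < d -> exists L, lower_contour le A L /\ h L <= d) ->
  (forall L, lower_contour le A L -> exists m, m \in ms /\ L m) ->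
  exists L, lower_contour le A L /\ h L <= 0.
Proof.
move=> hs ht hnn hsm hms.
have [m [_ Hm]] : exists m, m \in ms /\ forall n, exists L,
    lower_contour le A L /\ L m /\ h L <= q R n.
  apply: pigeon.
  - move=> x n k nk [L [LL [Lx hL]]]; exists L; split => //; split => //.
    exact: le_trans hL (q_anti R nk).
  - move=> n; have [L [LL hL]] := hsm _ (q_pos R n).
    have [x [xs Lx]] := hms L LL; by exists x; split => //; exists L.
have [Ls HLs] := choice Hm.
pose Lim := [set e | exists N, forall n, (N <= n)%N -> Ls n e].
pose J N k := [set e | A e /\ forall n, (N <= n <= N + k)%N -> Ls n e].
have LsA n : Ls n `<=` A by have [[_ ? _] _] := HLs n.
have Jdown N k : downset le A (J N k).
  split; first by move=> e [].
  move=> e e' [Ae He] Ae' le'; split => // n nN.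
  have [[_ _ Lc] _] := HLs n; exact: Lc (He n nN) Ae' le'.
have hJ N k : h (J N k) <= q R N *+ 2 - q R (N + k).
  elim: k => [|k IH].
    have -> : J N 0 = Ls N.
      rewrite predeqE => e; split.
        by move=> [_ H]; apply: H; rewrite addn0 leqnn.
      move=> Le; split; first exact: LsA Le.
      by move=> n; rewrite addn0 -eqn_leq => /eqP <-.
    have [_ [_ hL]] := HLs N; rewrite addn0 mulr2n; lra.
  have -> : J N k.+1 = J N k `&` Ls (N + k.+1)%N.
    rewrite predeqE => e; split.
      move=> [Ae H]; split; last by apply: H; rewrite leq_addr leqnn.
      split => // n /andP [n1 n2]; apply: H.
      by rewrite n1 /= (leq_trans n2) // leq_add2l.
    move=> [[Ae H] L]; split => // n /andP [n1 n2].
    move: n2; rewrite leq_eqVlt => /orP [/eqP -> //|]; rewrite addnS ltnS => n2.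
    by apply: H; rewrite n1.
  have [LL [_ hL]] := HLs (N + k.+1)%N.
  have hU := hnn _ (downsetU (Jdown N k) (lc_downset LL)).
  have hm := h_modular (J N k) (Ls (N + k.+1)%N) hs.
  rewrite !addnS in hL hm hU *; rewrite !qS in hL *; rewrite mulr2n in IH *; lra.
have approx (F : seq E) : exists N0, forall N, (N0 <= N)%N -> exists k0,
    forall k, (k0 <= k)%N -> forall e, e \in F -> (Lim e <-> J N k e).
  elim: F => [|e F [N0 IH]].
    by exists 0%N => N _; exists 0%N => k _ e; rewrite in_nil.
  case: (pselect (Lim e)) => [[T HT]|nL].
    exists (maxn N0 T) => N; rewrite geq_max => /andP [N0N TN].
    have [k0 Hk0] := IH N N0N; exists k0 => k kk e'.
    rewrite in_cons => /orP [/eqP ->|e'F]; last exact: Hk0.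
    split => [_|_]; last by exists T.
    split; first exact: (LsA N _ (HT N TN)).
    by move=> n /andP [Nn _]; apply: HT; apply: (leq_trans TN Nn).
  exists N0 => N N0N; have [k0 Hk0] := IH N N0N.
  have [n [Nn nLs]] : exists n, (N <= n)%N /\ ~ Ls n e.
    apply: contra_notP nL => H; exists N => n Nn.
    case: (pselect (Ls n e)) => // nn; exfalso; apply: H; by exists n.
  exists (maxn k0 (n - N)) => k; rewrite geq_max => /andP [k0k nk] e'.
  rewrite in_cons => /orP [/eqP ->|e'F]; last exact: Hk0.
  split => // -[_ H]; exfalso; apply: nLs; apply: H.
  by rewrite Nn /= -leq_subLR.
exists Lim; split.
  split.
  - by exists m; exists 0%N => n _; have [_ [? _]] := HLs n.
  - by move=> e [N HN]; apply: (LsA N); apply: HN.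
  - move=> e e' [N HN] Ae' le'; exists N => n Nn.
    have [[_ _ Lc] _] := HLs n; exact: Lc (HN n Nn) Ae' le'.
apply: h_le0 => eps e0.
have e4 : 0 < eps / 4 by rewrite divr_gt0.
have [s Hs] := ht _ e4.
have [N0 HN0] := approx s.
have [N1 HN1] := q_small e4.
have [k0 Hk0] := HN0 (N0 + N1)%N (leq_addr _ _).
have eq : Lim `&` [set` s] = J (N0 + N1)%N k0 `&` [set` s].
  rewrite predeqE => e; split => -[H1 H2]; split => //;
    by apply/(Hk0 k0 (leqnn _) e H2).
have H1 := h_approx hs Hs eq.
have H2 := hJ (N0 + N1)%N k0.
have H3 := q_anti R (leq_addl N0 N1).
have H4 := q_pos R (N0 + N1 + k0).
rewrite mulr2n in H1; rewrite mulr2n in H2; lra.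
Qed.

Lemma h_set0 (R : realType) (E : Type) (h : set E -> R) : hsplit h -> h set0 = 0.
Proof. by move=> hs; have := hs set0 set0; rewrite !set0I; lra. Qed.

Lemma largest (R : realType) (E : eqType) (le : E -> E -> Prop) (A : set E)
  (h : set E -> R) :
  hsplit h -> htail h -> (forall D, downset le A D -> 0 <= h D) ->
  forall L0, lower_contour le A L0 -> h L0 <= 0 ->
  lower_contour le A [set e | exists L, lower_contour le A L /\ h L <= 0 /\ L e] /\
  h [set e | exists L, lower_contour le A L /\ h L <= 0 /\ L e] <= 0.
Proof.
move=> hs ht hnn L0 LL0 hL0.
set Ls := [set e | _].
have Ldown : downset le A Ls.
  split; first by move=> e [L [[_ LA _] [_ Le]]]; exact: LA.
  move=> e e' [L [LL [hL Le]]] Ae' le'; exists L; split => //; split => //.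
  by case: LL => _ _ Lc; exact: Lc Le Ae' le'.
split.
  apply: downset_lc => //; have [[x Lx] _ _] := LL0; exists x; exists L0; by split => //; split.
apply: h_le0 => eps e0.
have e2 : 0 < eps / 2 by rewrite divr_gt0.
have [s Hs] := ht _ e2.
have [U [Ud [ULs [hU HU]]]] : exists U, downset le A U /\ U `<=` Ls /\ h U <= 0 /\
    forall e, e \in s -> Ls e -> U e.
  clear Hs; elim: s => [|e s [U [Ud [ULs [hU HU]]]]].
    exists set0; split; first by split => // e e' [].
    split => //; split; first by rewrite h_set0.
    by move=> e; rewrite in_nil.
  case: (pselect (Ls e)) => [[L [LL [hL Le]]]|nLe].
    exists (U `|` L); split; first exact: downsetU Ud (lc_downset LL).
    split; first by move=> x [/ULs|Lx] //; exists L.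
    split.
      have := h_modular U L hs; have := hnn _ (downsetI Ud (lc_downset LL)); lra.
    move=> x; rewrite in_cons => /orP [/eqP -> _|xs Lx]; [by right|left; exact: HU].
  exists U; split => //; split => //; split => //.
  move=> x; rewrite in_cons => /orP [/eqP -> //|xs Lx]; exact: HU.
have eq : Ls `&` [set` s] = U `&` [set` s].
  rewrite predeqE => x; split => -[H1 H2]; split => //; [exact: HU|exact: ULs].
have := h_approx hs Hs eq; rewrite mulr2n; lra.
Qed.

Lemma below_min (E : Type) (le : E -> E -> Prop) (A : set E) e :
  preorder_cond le -> A e -> exists m, minimals le A m /\ le m e.
Proof.
move=> [refl trans wf] Ae.
case: (pselect (exists m, minimals le A m /\ le m e)) => // H; exfalso.
have step : forall x, exists y, (A x /\ le x e) -> (A y /\ le y x /\ ~ le x y).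
  move=> x; case: (pselect (A x /\ le x e)) => [[Ax xe]|nx]; last by exists x.
  have nmin : ~ minimals le A x by move=> mx; apply: H; exists x.
  have : ~ (forall e', A e' -> le e' x -> equiv_pre le e' x).
    by move=> HH; apply: nmin; split.
  move=> /existsNP [y /not_implyP [Ay /not_implyP [yx ne]]].
  by exists y => _; split => //; split => // xy; apply: ne; split.
have [f Hf] := choice step.
pose s n := iter n f e.
have inv n : A (s n) /\ le (s n) e.
  elim: n => [|n [An ne]] /=; first by split => //; apply: refl.
  have [Ay [yx _]] := Hf (s n) (conj An ne); split => //; exact: trans yx ne.
have [N HN] := wf s (fun n => proj1 (proj2 (Hf (s n) (inv n)))).
have [_ [_ nle]] := Hf (s N) (inv N).
by apply: nle; exact: (HN N.+1 (leqnSn N)).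
Qed.

Unset Implicit Arguments.

Theorem lemmaA6 (R : realType) (E : countType) (le : E -> E -> Prop)
  (pi0 : R) (FG FB : E -> R) (phi : R -> R) (A : set E) :
  preorder_cond le ->
  0 < pi0 < 1 ->
  is_pmf FG -> is_pmf FB ->
  (forall e, 0 < FG e \/ 0 < FB e) ->
  (forall x y, 0 <= x -> y <= 1 -> x < y -> phi x < phi y) ->
  A !=set0 ->
  finite_set (minimals le A) ->
  exists Lstar, is_minimizer le phi pi0 FG FB A Lstar /\
    forall L, is_minimizer le phi pi0 FG FB A L -> L `<=` Lstar.
Proof.
move=> pc /andP [p0 p1] pG pB pos phimono [a0 Aa0] finmin.
pose D L := mass FG L * pi0 + mass FB L * (1 - pi0).
pose NU L := nu pi0 FG FB L.
have Dpos L : L !=set0 -> 0 < D L.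
  move=> [e Le].
  have sub : [set e] `<=` L by move=> x ->.
  have mG := mass_mono pG sub; have mB := mass_mono pB sub.
  rewrite !mass_set1 // in mG mB.
  have g0 := mass_ge0 L pG; have b0 := mass_ge0 L pB.
  have fg0 : 0 <= FG e by case: pG.
  have fb0 : 0 <= FB e by case: pB.
  rewrite /D; case: (pos e) => he; nra.
have Dle1 L : D L <= 1.
  have := mass_le1 L pG; have := mass_le1 L pB.
  have := mass_ge0 L pG; have := mass_ge0 L pB.
  rewrite /D; nra.
have NUD L : L !=set0 -> NU L * D L = mass FG L * pi0.
  by move=> Ln; rewrite /NU /nu -/(D L) divfK // gt_eqF // Dpos.
have nu01 L : L !=set0 -> 0 <= NU L /\ NU L <= 1.
  move=> Ln; have := Dpos L Ln; have := NUD L Ln.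
  have := mass_ge0 L pG; have := mass_ge0 L pB; rewrite /D => b0 g0 H Dp.
  split; nra.
have A_lc : lower_contour le A A by split => //; exists a0.
pose S := [set x | exists L, lower_contour le A L /\ x = NU L].
have S0 : S !=set0 by exists (NU A); exists A.
have Slb : lbound S 0.
  by move=> x [L [[Ln _ _] ->]]; have [] := nu01 L Ln.
have Shas : has_inf S by split => //; exists 0.
pose lam := inf S.
have lam_le L : lower_contour le A L -> lam <= NU L.
  by move=> LL; apply: ge_inf; [exists 0|exists L].
have lam0 : 0 <= lam by apply: lb_le_inf.
have lam1 : lam <= 1.
  by apply: le_trans (lam_le A A_lc) _; have [] := nu01 A (ex_intro _ a0 Aa0).
pose h L := pi0 * (1 - lam) * mass FG L - lam * (1 - pi0) * mass FB L.
have hE L : L !=set0 -> h L = (NU L - lam) * D L.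
  by move=> Ln; rewrite mulrBl NUD // /h /D; ring.
have hs : hsplit h.
  move=> X B; rewrite /h (mass_split X B pG) (mass_split X B pB); ring.
have hset0 := h_set0 hs.
have hnn : forall L, downset le A L -> 0 <= h L.
  move=> L LD; case: (eqVneq L set0) => [->|/set0P Ln]; first by rewrite hset0.
  have LL := downset_lc LD Ln.
  rewrite hE //; apply: mulr_ge0; last exact: ltW (Dpos L Ln).
  by rewrite subr_ge0 lam_le.
have ht : htail h.
  move=> eps e0.
  pose al := pi0 * (1 - lam); pose be := lam * (1 - pi0).
  have al0 : 0 <= al by rewrite /al; nra.
  have be0 : 0 <= be by rewrite /be; nra.
  have c0 : 0 < al + be + 1 by lra.
  pose e' := eps / (al + be + 1).
  have e'0 : 0 < e' by rewrite /e' divr_gt0.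
  have ce : e' * (al + be + 1) = eps by rewrite /e' divfK // gt_eqF.
  have [s1 H1] := mass_tail pG e'0; have [s2 H2] := mass_tail pB e'0.
  exists (s1 ++ s2) => X.
  have sub1 : X `&` ~` [set` (s1 ++ s2)] `<=` ~` [set` s1].
    by move=> x [_ /= nx] x1; apply: nx; rewrite mem_cat x1.
  have sub2 : X `&` ~` [set` (s1 ++ s2)] `<=` ~` [set` s2].
    by move=> x [_ /= nx] x1; apply: nx; rewrite mem_cat x1 orbT.
  have mG := mass_mono pG sub1; have mB := mass_mono pB sub2.
  have g0 := mass_ge0 (X `&` ~` [set` (s1 ++ s2)]) pG.
  have b0 := mass_ge0 (X `&` ~` [set` (s1 ++ s2)]) pB.
  set mg := mass FG _ in mG g0 *; set mb := mass FB _ in mB b0 *.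
  have t1 : al * mg <= al * e' by apply: ler_wpM2l => //; lra.
  have t2 : be * mb <= be * e' by apply: ler_wpM2l => //; lra.
  have t3 : 0 <= al * mg by apply: mulr_ge0.
  have t4 : 0 <= be * mb by apply: mulr_ge0.
  have t5 : 0 <= be * e' by apply: mulr_ge0; lra.
  have t6 : 0 <= al * e' by apply: mulr_ge0; lra.
  have ce2 : al * e' + be * e' + e' = eps by rewrite -ce; ring.
  rewrite /h -/al -/be -/mg -/mb; split; lra.
have hsm : forall d, 0 < d -> exists L, lower_contour le A L /\ h L <= d.
  move=> d d0; have [x [L [LL ->]] Hx] := inf_adherent d0 Shas.
  exists L; split => //; have [Ln _ _] := LL; rewrite hE //.
  have := lam_le L LL; have := Dle1 L; have := Dpos L Ln; rewrite -/lam in Hx; nra.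
have [ms Hms] := (finite_seqP _).1 finmin.
have hms : forall L, lower_contour le A L -> exists m, m \in ms /\ L m.
  move=> L [[e Le] LA Lc].
  have [m [mm me]] := below_min pc (LA e Le).
  exists m; split; last by apply: Lc Le _ me; case: mm.
  by move: mm; rewrite Hms.
have [L0 [LL0 hL0]] := exists_zero hs ht hnn hsm hms.
have [LLs hLs] := largest hs ht hnn LL0 hL0.
set Ls := [set e | _] in LLs hLs.
have NUs : NU Ls <= lam.
  have [Ln _ _] := LLs; move: hLs; rewrite hE // => H.
  have := Dpos Ls Ln; nra.
have phile x y : 0 <= x -> y <= 1 -> x <= y -> phi x <= phi y.
  move=> x0 y1; rewrite le_eqVlt => /orP [/eqP -> //|xy].
  exact/ltW/phimono.
exists Ls; split.
  split => // L' LL'; rewrite /xi; apply: phile.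
  - by have [Ln _ _] := LLs; have [] := nu01 Ls Ln.
  - by have [Ln _ _] := LL'; have [] := nu01 L' Ln.
  - exact: le_trans NUs (lam_le L' LL').
move=> L [LL HL] x Lx; exists L; split => //; split => //.
have [Ln _ _] := LL; have [Lsn _ _] := LLs.
have HLs := HL Ls LLs; rewrite /xi in HLs.
have NUL : NU L <= NU Ls.
  rewrite leNgt; apply/negP => lt.
  have := phimono _ _ (proj1 (nu01 Ls Lsn)) (proj2 (nu01 L Ln)) lt.
  by rewrite ltNge HLs.
rewrite hE //; have := Dpos L Ln; nra.
Qed.
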